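(* Let $n\geq 8$ and let $G$ be an $n$-vertex planar graph containing no subgraph isomorphic to $S_{2,2}$. If $G$ has a vertex of degree at least $5$, then $e(G)\leq 2n-4$.
   Context: All graphs are finite and simple; $e(G)$ denotes the number of edges of $G$. The double star $S_{2,2}$ is the tree obtained from an edge $xy$ by joining $x$ to two new vertices and $y$ to two further new vertices (6 vertices in total). *)

(* Defs.v *)
From HB Require Import structures.
From mathcomp Require Import all_boot all_order all_algebra.
From mathcomp Require Import all_classical all_reals all_analysis.
From mathcomp Require Import Rstruct Rstruct_topology.
From Stdlib Require Import Rdefinitions.
Set Implicit Arguments. Unset Strict Implicit. Unset Printing Implicit Defensive.
Import Order.TTheory GRing.Theory Num.Theory.

Local Open Scope classical_set_scope.
Local Open Scope ring_scope.

Definition simple_graph (T : finType) (e : rel T) : Prop :=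
  symmetric e /\ irreflexive e.

Definition edges (T : finType) (e : rel T) : {set {set T}} :=
  [set E : {set T} | [exists x, exists y, e x y && (E == [set x; y]%SET)]].

Definition num_edges (T : finType) (e : rel T) : nat := #|edges e|.

Definition degree (T : finType) (e : rel T) (x : T) : nat := #|[set y | e x y]|.

Definition has_subgraph (U T : finType) (h : rel U) (e : rel T) : Prop :=
  exists f : U -> T, injective f /\ forall i j, h i j -> e (f i) (f j).

(* The double star S_{2,2} on 'I_6: central edge 0-1, 0 joined to 2,3,
   1 joined to 4,5 (as a symmetric relation). *)
Definition S22_edge (i j : nat) : bool :=
  [|| (i == 0%N) && (j == 1%N), (i == 0%N) && (j == 2%N), (i == 0%N) && (j == 3%N),
      (i == 1%N) && (j == 4%N) | (i == 1%N) && (j == 5%N)].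

Definition S22 : rel 'I_6 := fun i j => S22_edge i j || S22_edge j i.

Definition planar (T : finType) (e : rel T) : Prop :=
  exists (pos : T -> (R * R)%type) (arc : T -> T -> R -> (R * R)%type),
    injective pos /\
    (forall x y, e x y ->
       {within `[0%R, 1%R], continuous (arc x y)} /\
       arc x y 0%R = pos x /\ arc x y 1%R = pos y /\
       {in `[0%R, 1%R] &, injective (arc x y)} /\
       (forall t, t \in `]0%R, 1%R[ -> forall z, arc x y t <> pos z)) /\
    (forall x y u v, e x y -> e u v -> [set x; y]%SET != [set u; v]%SET ->
       forall s t, s \in `]0%R, 1%R[ -> t \in `]0%R, 1%R[ ->
       arc x y s <> arc u v t).

(* Main.v *)
Require Import Defs.
From mathcomp Require Import all_boot all_order all_algebra.
From mathcomp Require classical_sets.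
From mathcomp Require Import zify.

Lemma card_sum (U : finType) (b : pred U) : #|[set u | b u]| = \sum_u (b u : nat).
Proof.
rewrite -sum1_card big_mkcond /=; apply: eq_bigr => u _; rewrite inE; by case: (b u).
Qed.

Lemma degE (T : finType) (e : rel T) x : degree e x = \sum_y (e x y : nat).
Proof. rewrite /degree -sum1_card big_mkcond /=; apply: eq_bigr => y _; case: ifP => H.
  by move/classical_sets.set_mem: H => /= ->.
case E: (e x y) => //; move: H; by rewrite classical_sets.mem_set.
Qed.

Lemma edges_le (T : finType) (e : rel T) (r : rel T) :
  simple_graph e -> (forall x y, x != y -> r x y || r y x) ->
  #|edges e| <= \sum_(p : T * T) (e p.1 p.2 && r p.1 p.2 : nat).
Proof.
move=> [sy ir] tot.
rewrite -card_sum.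
apply: leq_trans (leq_imset_card (fun p : T * T => [set p.1; p.2]%SET) _).
apply: subset_leq_card; apply/subsetP => E; rewrite inE.
move=> /existsP [x /existsP [y /andP [exy /eqP ->]]].
have nxy : x != y by apply/eqP => exy'; move: exy; rewrite exy' ir.
case/orP: (tot x y nxy) => rxy.
  by apply/imsetP; exists (x, y) => //; rewrite inE /= exy rxy.
apply/imsetP; exists (y, x); first by rewrite inE /= sy exy rxy.
by rewrite /= setUC.
Qed.

Lemma handshake (T : finType) (e : rel T) :
  simple_graph e -> 2 * num_edges e <= \sum_x degree e x.
Proof.
move=> sg.
pose r := fun x y : T => (enum_rank x < enum_rank y)%N.
have t1 : forall x y, x != y -> r x y || r y x.
  move=> x y nxy; rewrite /r -neq_ltn; apply: contra nxy => /eqP h.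
  by apply/eqP; apply: enum_rank_inj; apply: val_inj.
have t2 : forall x y, x != y -> (fun a b => r b a) x y || (fun a b => r b a) y x.
  by move=> x y /t1; rewrite orbC.
have := @edges_le _ _ r sg t1; have := @edges_le _ _ _ sg t2.
rewrite /num_edges mul2n -addnn => h1 h2.
apply: leq_trans (leq_add h2 h1) _.
rewrite -big_split /=.
rewrite (eq_bigr _ (fun x _ => degE _ e x)).
rewrite (pair_big xpredT xpredT (fun x y => (e x y : nat))) /=.
apply: leq_sum => [[x y]] _ /=.
case: (e x y) => //=; rewrite /r; case: ltngtP => //.
Qed.

Lemma cardD1_ge (U : finType) (A : {set U}) x : #|A| <= #|A :\ x|.+1.
Proof. rewrite (cardsD1 x A); by case: (x \in A). Qed.

Lemma degN (T : finType) (e : rel T) x : degree e x = #|[set y | e x y]|.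
Proof. by rewrite degE card_sum. Qed.

Lemma nbr_small (T : finType) (e : rel T) :
  simple_graph e -> ~ has_subgraph S22 e ->
  forall h u, 5 <= degree e h -> e h u -> degree e u <= 2.
Proof.
move=> [sy ir] nS h u dh ehu.
rewrite leqNgt; apply/negP => du; apply: nS.
have neq : forall x y, e x y -> x != y.
  by move=> x y; apply: contraTneq => ->; rewrite ir.
rewrite degN in dh; rewrite degN in du.
set Nu := [set y | e u y] in du; set Nh := [set y | e h y] in dh.
have := cardD1_ge _ Nu h => c1.
have /card_gt0P [a Ha] : 0 < #|Nu :\ h| by lia.
have := cardD1_ge _ (Nu :\ h) a => c2.
have /card_gt0P [b Hb] : 0 < #|Nu :\ h :\ a| by lia.
have := cardD1_ge _ Nh u => c3.
have := cardD1_ge _ (Nh :\ u) a => c4.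
have := cardD1_ge _ (Nh :\ u :\ a) b => c5.
have /card_gt0P [c Hc] : 0 < #|Nh :\ u :\ a :\ b| by lia.
have := cardD1_ge _ (Nh :\ u :\ a :\ b) c => c6.
have /card_gt0P [d Hd] : 0 < #|Nh :\ u :\ a :\ b :\ c| by lia.
move: Ha Hb Hc Hd; rewrite !inE.
move=> /andP [ah eua] /and3P [ba bh eub] /and4P [cb ca cu ehc].
move=> /and5P [dc db da du' ehd].
have hu := neq _ _ ehu; have ua := neq _ _ eua; have ub := neq _ _ eub.
have hc := neq _ _ ehc; have hd := neq _ _ ehd.
have ha : h != a by rewrite eq_sym. have hb : h != b by rewrite eq_sym.
have uc : u != c by rewrite eq_sym. have ud : u != d by rewrite eq_sym.
have cd : c != d by rewrite eq_sym. have ab : a != b by rewrite eq_sym.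
have euh : e u h by rewrite sy. have ech : e c h by rewrite sy.
have edh : e d h by rewrite sy. have eau : e a u by rewrite sy.
have ebu : e b u by rewrite sy.
pose s := [:: h; u; c; d; a; b].
have us : uniq s.
  by rewrite /s /= !inE !negb_or hu hc hd ha hb uc ud ua ub cd ca cb da db ab.
exists (fun i : 'I_6 => nth h s i); split.
  move=> i j /eqP; rewrite nth_uniq //.
    by move=> /eqP ij; apply: val_inj.
move=> [i Hi] [j Hj]; rewrite /S22 /S22_edge /=.
case: i Hi => [|[|[|[|[|[|i]]]]]] Hi //; case: j Hj => [|[|[|[|[|[|j]]]]]] Hj //=.
Qed.

Lemma sum4 (T : finType) : \sum_(x : T) 4 = 4 * #|T|.
Proof. by rewrite sum_nat_const mulnC cardE. Qed.

Theorem lemma2p2 (T : finType) (e : rel T) :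
  simple_graph e -> 8 <= #|T| -> planar e -> ~ has_subgraph S22 e ->
  (exists v : T, 5 <= degree e v) ->
  num_edges e <= 2 * #|T| - 4.
Proof.
move=> sg _ _ nS [h dh].
have hs := @handshake _ _ sg.
have small := @nbr_small _ _ sg nS.
have [sy ir] := sg.
suff : \sum_x degree e x + 8 <= 4 * #|T| by lia.
rewrite -sum4.
case: (boolP [exists h2, (h2 != h) && (4 < degree e h2)]).
  move=> /existsP [h2 /andP [nh2 dh2]].
  pose H := [set x | 4 < degree e x].
  pose c := fun y => \sum_(x in H) (e x y : nat).
  have eq1 : \sum_(x in H) degree e x = \sum_y c y.
    rewrite (eq_bigr _ (fun x _ => degE _ e x)) exchange_big //.
  have eq2 : \sum_y c y = \sum_(y | y \notin H) c y.
    rewrite (bigID (fun y => y \in H)) /= big1 // => y yH.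
    apply: big1 => x xH; case E: (e x y) => //.
    move: xH yH; rewrite !inE => xH yH.
    by have := small x y xH E; lia.
  rewrite (bigID (fun y => y \in H)) /= eq1 eq2.
  rewrite [X in _ <= X](bigID (fun y => y \in H)) /=.
  have cH : 2 <= #|H|.
    have <- : #|[set h; h2]| = 2 by rewrite cards2 eq_sym nh2.
    apply: subset_leq_card; apply/subsetP => x.
    by rewrite !inE => /orP [] /eqP ->.
  have b1 : \sum_(x in H) 4 = 4 * #|H| by rewrite sum_nat_const mulnC.
  have b2 : \sum_(x | x \notin H) (degree e x + c x) <= \sum_(x | x \notin H) 4.
    apply: leq_sum => x xH.
    move: (xH); rewrite inE -leqNgt => dx.
    case: (boolP [exists y in H, e y x]).
      move=> /existsP [y /andP [yH eyx]].
      move: (yH); rewrite inE => dy.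
      have dx2 := small y x dy eyx.
      have : c x <= degree e x.
        rewrite degE /c (big_mkcond (fun y => y \in H)) /=.
        apply: leq_sum => z _; case: (z \in H) => //; by rewrite sy; case: (e x z).
      lia.
    rewrite negb_exists => /forallP nx.
    have -> : c x = 0.
      apply: big1 => y yH; have := nx y; rewrite yH /=; by case: (e y x).
    lia.
  move: b2; rewrite big_split /= b1.
  rewrite [X in _ <= X + _]/= -/H; lia.
rewrite negb_exists => /forallP nx.
rewrite (bigD1 h) //= [X in _ <= X](bigD1 h) //=.
have b2 : \sum_(x | x != h) (degree e x + 2 * e h x) <= \sum_(x | x != h) 4.
  apply: leq_sum => x xh.
  have := nx x; rewrite xh /= -leqNgt => dx.
  case E: (e h x) => /=; last by lia.
  have := small h x dh E; lia.
have eq3 : \sum_(x | x != h) (2 * e h x) = 2 * degree e h.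
  rewrite -big_distrr /= degE [X in _ = 2 * X](bigD1 h) //= ir //.
move: b2; rewrite big_split /= eq3; lia.
Qed.
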